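(* Let $M\ge \frac52$ and $\mu=\frac{2}{2M+3}$. Algorithm A (defined in the context) is a valid semi-online algorithm with migration factor at most $M$, and for every input whose optimal offline makespan is $1$ it produces a schedule of makespan at most $1+\mu=\frac{2M+5}{2M+3}$. Hence its competitive ratio is at most $\frac{2M+5}{2M+3}$.
   Context: Model (two hierarchical machines with migration, bin stretching). Jobs $1,2,\dots,n$ arrive one by one ($n$ unknown in advance). Job $j$ has a size $p_j>0$ and a grade of service (GoS) $g_j\in\{1,2\}$; a job of GoS $1$ may only be processed on machine $m_1$, a job of GoS $2$ may be processed on $m_1$ or on $m_2$. The load of a machine is the total size of the jobs assigned to it, and the makespan is the maximum load. When job $j$ arrives, the algorithm must assign it to a machine, and at the same time it may reassign (migrate) previously arrived jobs to other machines (respecting the GoS constraints), provided that the total size of the migrated jobs is at most $M\cdot p_j$; $M\ge 0$ is the migration factor. Bin stretching: the optimal offline makespan of the complete input is known in advance and scaled to $1$; in particular every job has size at most $1$, the total size of all jobs is at most $2$, and the total size of all GoS-$1$ jobs is at most $1$. The competitive ratio of an algorithm is the supremum over inputs of (algorithm's makespan)/(optimal makespan). Notation: $Y_{j}$ is the set of jobs on $m_2$ just after job $j$ has been handled (including migrations), $y_j$ its total size, $y_0=0$. $Z$ denotes the set of GoS-2 jobs currently on $m_1$. Algorithm A (with $\mu=\frac{2}{2M+3}$). On arrival of job $j$: (i) if $g_j=1$ or $y_{j-1}\ge 1-\mu$, assign $j$ to $m_1$; (ii) else if $y_{j-1}+p_j\le 1+\mu$, assign $j$ to $m_2$; (iii)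 otherwise, among all GoS-2 jobs arrived so far (the current $Z$, the current $Y_{j-1}$, and $j$), choose a subset $W$ of maximum total size subject to total size at most $1$; rearrange so that exactly the jobs of $W$ are on $m_2$ and all other arrived jobs are on $m_1$. *)

(* Defs.v *)
From mathcomp Require Import all_boot all_order all_algebra.
Set Implicit Arguments. Unset Strict Implicit. Unset Printing Implicit Defensive.
Import Order.TTheory GRing.Theory Num.Theory.
Local Open Scope ring_scope.

(* An input: n jobs 0..n-1 (arrival order), sizes p, grades of service g.
   A schedule of (a prefix of) the jobs is a map a : 'I_n -> bool,
   a i = true meaning job i is on m2, false meaning it is on m1.
   Only jobs i < t (the arrived ones) are relevant in a prefix of length t. *)

Section Defs.
Variables (R : realFieldType) (n : nat) (p : 'I_n -> R) (g : 'I_n -> nat).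

Definition load2 (t : nat) (a : 'I_n -> bool) : R :=
  \sum_(i < n | (i < t)%N && a i) p i.
Definition load1 (t : nat) (a : 'I_n -> bool) : R :=
  \sum_(i < n | (i < t)%N && ~~ a i) p i.

Definition gos_ok (t : nat) (a : 'I_n -> bool) : Prop :=
  forall i : 'I_n, (i < t)%N -> a i -> g i = 2%N.

Definition makespan (t : nat) (a : 'I_n -> bool) : R :=
  Num.max (load1 t a) (load2 t a).

Definition opt_makespan_is (opt : R) : Prop :=
  (exists a, gos_ok n a /\ makespan n a = opt) /\
  (forall a, gos_ok n a -> opt <= makespan n a).

(* total size of previously arrived jobs (i < j) moved between the state
   a (before job j) and a' (after job j was handled) *)
Definition migrated (j : nat) (a a' : 'I_n -> bool) : R :=
  \sum_(i < n | (i < j)%N && (a i != a' i)) p i.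

Definition mu (M : R) : R := 2 / (2 * M + 3).

(* One step of Algorithm A when job j arrives: a is the state before
   (jobs < j scheduled), a' the state after (jobs <= j scheduled).
   In case (iii) any subset of maximum total size may be chosen. *)
Definition algA_step (M : R) (j : 'I_n) (a a' : 'I_n -> bool) : Prop :=
  let y := load2 j a in
  if (g j == 1%N) || (1 - mu M <= y) then
    a' j = false /\ (forall i : 'I_n, (i < j)%N -> a' i = a i)
  else if y + p j <= 1 + mu M then
    a' j = true /\ (forall i : 'I_n, (i < j)%N -> a' i = a i)
  else
    (* W = {i <= j | a' i} is a max-size subset of arrived GoS-2 jobs
       of total size <= 1; all other arrived jobs are on m1 *)
    (forall i : 'I_n, (i <= j)%N -> a' i -> g i = 2%N) /\
    load2 j.+1 a' <= 1 /\
    (forall W : {set 'I_n},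
        (forall i, i \in W -> (i <= j)%N /\ g i = 2%N) ->
        \sum_(i in W) p i <= 1 ->
        \sum_(i in W) p i <= load2 j.+1 a').

(* s t = the state after the first t jobs have been handled *)
Definition algA_run (M : R) (s : nat -> 'I_n -> bool) : Prop :=
  forall j : 'I_n, algA_step M j (s (j : nat)) (s j.+1).

End Defs.

(* Main.v *)
Require Import Defs.
From mathcomp Require Import all_boot all_order all_algebra.
From mathcomp Require Import ring lra.
Import Order.TTheory GRing.Theory Num.Theory.
Local Open Scope ring_scope.

Lemma sum_le_pred (R : realFieldType) (n : nat) (p : 'I_n -> R)
  (hp : forall j, 0 <= p j) (P Q : pred 'I_n) :
  (forall i, P i -> Q i) -> \sum_(i | P i) p i <= \sum_(i | Q i) p i.
Proof.
move=> PQ; rewrite [X in _ <= X](bigID P) /=.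
have ->: \sum_(i | Q i && P i) p i = \sum_(i | P i) p i.
  by apply: eq_bigl => i; case: (boolP (P i)) => Pi; rewrite ?(PQ _ Pi) ?andbF.
by rewrite lerDl; apply: sumr_ge0 => i _; exact: hp.
Qed.

Lemma sum_split_last (R : realFieldType) (n : nat) (p : 'I_n -> R)
  (j : 'I_n) (b : 'I_n -> bool) :
  \sum_(i < n | (i < j.+1)%N && b i) p i =
  \sum_(i < n | (i < j)%N && b i) p i + (if b j then p j else 0).
Proof.
case: (boolP (b j)) => bj.
- rewrite (bigD1 j) /=; last by rewrite ltnS leqnn bj.
  rewrite addrC; congr (_ + _); apply: eq_bigl => i.
  rewrite -val_eqE /= ltnS leq_eqVlt.
  by case: (ltngtP i j) => h; rewrite ?andbF ?andbT //= ?andbT.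
- rewrite addr0; apply: eq_bigl => i.
  rewrite ltnS leq_eqVlt; case: (boolP (i == j :> nat)) => //= /eqP h.
  have -> : i = j by apply: val_inj.
  by rewrite ltnn (negbTE bj).
Qed.

Lemma load2_same (R : realFieldType) (n : nat) (p : 'I_n -> R) t (a a' : 'I_n -> bool) :
  (forall i : 'I_n, (i < t)%N -> a' i = a i) -> load2 p t a' = load2 p t a.
Proof.
move=> E; apply: eq_bigl => i.
by case: (boolP (i < t)%N) => h //=; rewrite E.
Qed.
Set Implicit Arguments. Unset Strict Implicit.

Lemma step_inv (R : realFieldType) (n : nat) (p : 'I_n -> R) (g : 'I_n -> nat)
  (M : R) (j : 'I_n) (a a' : 'I_n -> bool) :
  algA_step p g M j a a' ->
  [/\ (g j = 1%N \/ 1 - mu M <= load2 p j a), a' j = false &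
      forall i : 'I_n, (i < j)%N -> a' i = a i]
  \/ [/\ g j <> 1%N, load2 p j a < 1 - mu M, load2 p j a + p j <= 1 + mu M,
         a' j = true & forall i : 'I_n, (i < j)%N -> a' i = a i]
  \/ [/\ g j <> 1%N /\ load2 p j a < 1 - mu M, 1 + mu M < load2 p j a + p j,
        (forall i : 'I_n, (i <= j)%N -> a' i -> g i = 2%N),
        load2 p j.+1 a' <= 1 &
        (forall W : {set 'I_n},
          (forall i, i \in W -> (i <= j)%N /\ g i = 2%N) ->
          \sum_(i in W) p i <= 1 ->
          \sum_(i in W) p i <= load2 p j.+1 a')].
Proof.
rewrite /algA_step /=.
case: ifP => [/orP h [h1 h2]|/negbT/norP [h1 h2]].
  by left; split => //; case: h => [/eqP|]; auto.
rewrite -ltNge in h2.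
case: ifP => [h3 [h4 h5]|/negbT h3 [h4 [h5 h6]]].
  by right; left; split => // /eqP; rewrite (negbTE h1).
rewrite -ltNge in h3.
by right; right; split => //; split => // /eqP; rewrite (negbTE h1).
Qed.

Definition cand (R : realFieldType) (n : nat) (p : 'I_n -> R) (g : 'I_n -> nat)
  (j : 'I_n) (W : {set 'I_n}) : bool :=
  [forall i in W, (i <= j)%N && (g i == 2%N)] && (\sum_(i in W) p i <= 1).

Definition Wmax (R : realFieldType) (n : nat) (p : 'I_n -> R) (g : 'I_n -> nat)
  (j : 'I_n) : {set 'I_n} :=
  [arg max_(W > set0 | cand p g j W) (\sum_(i in W) p i : R)]%O.

Definition stepf (R : realFieldType) (M : R) (n : nat) (p : 'I_n -> R) (g : 'I_n -> nat)
  (j : 'I_n) (a : 'I_n -> bool) : 'I_n -> bool :=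
  if (g j == 1%N) || (1 - mu M <= load2 p j a) then (fun i => if i == j then false else a i)
  else if load2 p j a + p j <= 1 + mu M then (fun i => if i == j then true else a i)
  else (fun i => i \in Wmax p g j).

Fixpoint sf (R : realFieldType) (M : R) (n : nat) (p : 'I_n -> R) (g : 'I_n -> nat)
  (t : nat) : 'I_n -> bool :=
  match t with
  | 0 => fun _ => false
  | t'.+1 => match insub t' with Some j => stepf M p g j (sf M p g t') | None => sf M p g t' end
  end.

Lemma sf_run (R : realFieldType) (M : R) (n : nat) (p : 'I_n -> R) (g : 'I_n -> nat) :
  algA_run p g M (sf M p g).
Proof.
move=> j; rewrite /= valK /algA_step /stepf /=.
case: ifP => C1; rewrite ?C1.
  split; first by rewrite eqxx.
  by move=> i lt; rewrite ifN //; apply: contraTneq lt => ->; rewrite ltnn.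
case: ifP => C2; rewrite ?C2.
  split; first by rewrite eqxx.
  by move=> i lt; rewrite ifN //; apply: contraTneq lt => ->; rewrite ltnn.
have c0 : cand p g j set0.
  by rewrite /cand big_set0 ler01 andbT; apply/forall_inP => i; rewrite in_set0.
rewrite /Wmax; case: arg_maxP => // W /andP [/forall_inP HW HW1] Hmax.
have HL : load2 p j.+1 (fun i => i \in W) = \sum_(i in W) p i.
  rewrite /load2; apply: eq_bigl => i; case: (boolP (i \in W)) => iW; rewrite ?andbF ?andbT //.
  by rewrite ltnS; case/andP: (HW _ iW).
split; [|split].
- by move=> i _ iW; case/andP: (HW _ iW) => _ /eqP.
- by rewrite HL.
- move=> W' HW' HW'1; rewrite HL; apply: Hmax.
  rewrite /cand HW'1 andbT; apply/forall_inP => i /HW' [-> ->] //.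
Qed.
Unset Implicit Arguments.

Theorem mainTheorem1 (R : realFieldType) (M : R) (hM : 5 / 2 <= M)
  (n : nat) (p : 'I_n -> R) (g : 'I_n -> nat)
  (hp : forall j, 0 < p j)
  (hg : forall j, g j = 1%N \/ g j = 2%N)
  (hopt : opt_makespan_is p g 1) :
  (exists s : nat -> 'I_n -> bool, algA_run p g M s) /\
  (forall s : nat -> 'I_n -> bool, algA_run p g M s ->
     (forall j : 'I_n, migrated p j (s (j : nat)) (s j.+1) <= M * p j) /\
     (forall t : nat, (t <= n)%N -> gos_ok g t (s t)) /\
     makespan p n (s n) <= 1 + mu M /\
     1 + mu M = (2 * M + 5) / (2 * M + 3)).
Proof.
have M0 : 0 < 2 * M + 3 by lra.
have nz : 2 * M + 3 != 0 by rewrite gt_eqF.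
have hm : (2 * M + 3) * mu M = 2 by rewrite /mu; field.
have m0 : 0 < mu M by rewrite /mu divr_gt0 //; lra.
set m := mu M in hm m0 *.
have hp0 : forall j, 0 <= p j by move=> j; exact: ltW.
case: hopt => [[o [ho1 ho2]] _].
have Lo1 : load1 p n o <= 1 by rewrite -ho2 /makespan le_max lexx.
have Lo2 : load2 p n o <= 1 by rewrite -ho2 /makespan le_max lexx orbT.
split; first by exists (sf M p g); exact: sf_run.
move=> s hs.
have G : forall t, (t <= n)%N -> gos_ok g t (s t).
  elim=> [|t IH] ht; first by move=> i.
  have ltn : (t < n)%N by [].
  have IH' := IH (ltnW ltn).
  have := step_inv (hs (Ordinal ltn)); rewrite /=.
  move=> [[_ e1 e2]|[[g1 _ _ e1 e2]|[[g1 _] _ e1 _ _]]] i.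
  - rewrite ltnS leq_eqVlt => /orP [/eqP ie|il].
      have -> : i = Ordinal ltn by apply: val_inj.
      by rewrite e1.
    by rewrite e2 //; apply: IH'.
  - rewrite ltnS leq_eqVlt => /orP [/eqP ie|il].
      have -> : i = Ordinal ltn by apply: val_inj.
      by move=> _; case: (hg (Ordinal ltn)).
    by rewrite e2 //; apply: IH'.
  - by rewrite ltnS; exact: e1.
split.
  move=> j.
  have := step_inv (hs j).
  move=> [[_ e1 e2]|[[_ _ _ e1 e2]|[[g1 ylt] ygt Ga' Lw Wmx]]].
  - rewrite /migrated big_pred0; first by rewrite mulr_ge0 //; lra.
    by move=> i; case: (boolP (i < j)%N) => h //=; rewrite e2 // eqxx.
  - rewrite /migrated big_pred0; first by rewrite mulr_ge0 //; lra.
    by move=> i; case: (boolP (i < j)%N) => h //=; rewrite e2 // eqxx.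
  set a := s (j : nat); set a' := s j.+1.
  have Ga : forall i : 'I_n, (i < j)%N -> a i -> g i = 2%N := G j (ltnW (ltn_ord j)).
  have gj2 : g j = 2%N by case: (hg j).
  set D1 := \sum_(i : 'I_n | (i < j)%N && (a i && ~~ a' i)) p i.
  set D2 := \sum_(i : 'I_n | (i < j)%N && (~~ a i && a' i)) p i.
  set c := \sum_(i : 'I_n | (i < j)%N && (a i && a' i)) p i.
  have D10 : 0 <= D1 by rewrite /D1; apply: sumr_ge0 => i _; exact: hp0.
  have D20 : 0 <= D2 by rewrite /D2; apply: sumr_ge0 => i _; exact: hp0.
  have c0 : 0 <= c by rewrite /c; apply: sumr_ge0 => i _; exact: hp0.
  have Emig : migrated p j a a' = D1 + D2.
    rewrite /migrated (bigID (fun i => a i)) /=; congr (_ + _); apply: eq_bigl => i;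
    by case: (a i); case: (a' i); rewrite /= ?andbT ?andbF.
  have Ey : load2 p j a = c + D1.
    rewrite /load2 (bigID (fun i => a' i)) /=; congr (_ + _); apply: eq_bigl => i;
    by case: (a i); case: (a' i); rewrite /= ?andbT ?andbF.
  have Ew0 : load2 p j a' = c + D2.
    rewrite /load2 (bigID (fun i => a i)) /=; congr (_ + _); apply: eq_bigl => i;
    by case: (a i); case: (a' i); rewrite /= ?andbT ?andbF.
  have Ew : load2 p j.+1 a' = load2 p j a' + (if a' j then p j else 0).
    exact: sum_split_last.
  have Eu : \sum_(i : 'I_n | (i < j)%N && (a i || a' i)) p i = c + D1 + D2.
    rewrite (bigID (fun i => a i)) /=.
    congr (_ + _); last by apply: eq_bigl => i;
      case: (a i); case: (a' i); rewrite /= ?andbT ?andbF.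
    rewrite -Ey /load2.
    apply: eq_bigl => i; by case: (a i); case: (a' i); rewrite /= ?andbT ?andbF.
  set A := \sum_(i : 'I_n | (i < j.+1)%N && (g i == 2%N)) p i.
  have EA : A = \sum_(i : 'I_n | (i < j)%N && (g i == 2%N)) p i + p j.
    by rewrite /A sum_split_last gj2 eqxx.
  have Hu : \sum_(i : 'I_n | (i < j)%N && (a i || a' i)) p i <=
            \sum_(i : 'I_n | (i < j)%N && (g i == 2%N)) p i.
    apply: sum_le_pred => // i /andP [h /orP [ai|ai']]; rewrite h /=; apply/eqP.
      exact: Ga.
    exact: Ga' (ltnW h) ai'.
  have HA : A <= 1 + load2 p j.+1 a'.
    rewrite /A (bigID o) /= addrC; apply: lerD.
    - apply: le_trans Lo1; apply: sum_le_pred => // i /andP [_ ->].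
      by rewrite ltn_ord.
    - set W := [set i : 'I_n | ((i < j.+1)%N && (g i == 2%N)) && o i].
      have -> : \sum_(i : 'I_n | ((i < j.+1)%N && (g i == 2%N)) && o i) p i = \sum_(i in W) p i.
        by apply: eq_bigl => i; rewrite inE.
      apply: Wmx.
        by move=> i; rewrite inE ltnS => /andP [/andP [h /eqP ->] _].
      apply: le_trans Lo2; apply: sum_le_pred => // i; rewrite inE => /andP [_ ->].
      by rewrite ltn_ord.
  rewrite Emig.
  move: Ew Lw HA; rewrite EA Ew0.
  rewrite -/m Ey in ylt ygt.
  case: (a' j) => -> Lw HA.
  + have h1 : 0 <= (M + 1) * (p j - (1 + m - (c + D1))) by apply: mulr_ge0; lra.
    have h2 : 0 <= (M + 2) * (1 - m - (c + D1)) by apply: mulr_ge0; lra.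
    nra.
  + have h1 : 0 <= (M + 1) * (p j - 2 * m) by apply: mulr_ge0; lra.
    nra.
split; first exact: G.
split; last by rewrite /m /mu; field.
have I : forall t, (t <= n)%N -> load2 p t (s t) <= 1 + m /\
    (1 - m <= load2 p t (s t) \/ load2 p t o <= load2 p t (s t)).
  elim=> [|t IH] ht.
    have z : forall b, load2 p 0 b = 0 by move=> b; rewrite /load2 big_pred0.
    rewrite !z; split; [lra|right; lra].
  have ltn : (t < n)%N by [].
  have [Y1 Y2] := IH (ltnW ltn).
  set j := Ordinal ltn.
  have Sp : forall b, load2 p t.+1 b = load2 p t b + (if b j then p j else 0).
    by move=> b; exact: (@sum_split_last R n p j b).
  have Eo : load2 p t.+1 o <= load2 p t o + p j.
    by rewrite Sp lerD2l; case: (o j) => //; exact: hp0.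
  have := step_inv (hs j); rewrite /= -/m.
  move=> [[gc e1 e2]|[[_ ylt yle e1 e2]|[[g1 ylt] ygt Ga' Lw Wmx]]].
  - have Ey : load2 p t.+1 (s t.+1) = load2 p t (s t).
      by rewrite Sp e1 addr0; apply: load2_same => i; exact: e2.
    rewrite Ey; case: gc => [gj|yb]; last by split => //; left.
    have oj : o j = false.
      by apply/negbTE/negP => oj; move: (ho1 j (ltn_ord j) oj); rewrite gj.
    by rewrite Sp oj addr0.
  - have Ey : load2 p t.+1 (s t.+1) = load2 p t (s t) + p j.
      by rewrite Sp e1; congr (_ + _); apply: load2_same => i; exact: e2.
    rewrite Ey; split => //.
    have := hp (j); case: Y2 => h; [left|right]; lra.
  - split; first lra.
    right.
    set W := [set i : 'I_n | (i < t.+1)%N && o i].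
    have -> : load2 p t.+1 o = \sum_(i in W) p i by apply: eq_bigl => i; rewrite inE.
    apply: Wmx.
      move=> i; rewrite inE ltnS => /andP [h oi]; split => //.
      exact: ho1 (ltn_ord i) oi.
    apply: le_trans Lo2; apply: sum_le_pred => // i; rewrite inE => /andP [_ ->].
    by rewrite ltn_ord.
have [Y1 Y2] := I n (leqnn n).
have Tot : forall b, load1 p n b + load2 p n b = \sum_(i : 'I_n | (i < n)%N) p i.
  by move=> b; rewrite /load1 /load2 addrC [RHS](bigID b).
rewrite /makespan ge_max Y1 andbT.
have := Tot (s n); have := Tot o; case: Y2 => h; lra.
Qed.
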